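(* Let $\Omega$ and $Y$ be proper subdomains of $\mathbb{C}$, let $s\in Y$, and suppose $\mathscr{C}_{\Omega}^{Y,s}(z)>0$ for all $z\in\Omega$. Then $\eta_\Omega(w)\geq \mathscr{C}_{\Omega}^{Y,s}(w)$ for every $w\in\Omega$.
   Context: $\mathbb{D}=\{z\in\mathbb{C}:|z|<1\}$. For domains $\Omega\subset\mathbb{C}$, $Y\subsetneq\mathbb{C}$, and points $w\in\Omega$, $s\in Y$, let $\mathcal{H}^s_w(\Omega,Y)$ be the set of holomorphic maps $h:\Omega\to Y$ with $h(w)=s$ and $h(z)\neq s$ for all $z\in\Omega\setminus\{w\}$. For a domain $Y\subsetneq\mathbb{C}$ and $v\in Y$, the Hurwitz density is $\eta_Y(v)=2/r_Y(v)$, where $r_Y(v)=\max\{h'(0): h:\mathbb{D}\to Y \text{ holomorphic},\ h(0)=v,\ h(z)\neq v \text{ for } z\in\mathbb{D}\setminus\{0\},\ h'(0)>0\}$. The Carathéodory density of the Hurwitz metric of $\Omega$ relative to $Y$ is $\mathscr{C}_{\Omega}^{Y,s}(w)=\sup\{\eta_Y(h(w))|h'(w)| : h\in\mathcal{H}^s_w(\Omega,Y)\}$ (defined to be $0$ if the family is empty). *)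

(* Defs.v *)
(* Stdlib reals + Coquelicot complex numbers C.
   is_derive over K = C_AbsRing is the complex (holomorphic) derivative. *)
From Stdlib Require Import Reals ClassicalEpsilon.
From Coquelicot Require Import Coquelicot.
Open Scope R_scope.

Definition connected_set (D : C -> Prop) : Prop :=
  forall U V : C -> Prop, open U -> open V ->
    (forall z, D z -> U z \/ V z) ->
    (forall z, D z -> U z -> V z -> False) ->
    (exists z, D z /\ U z) -> (exists z, D z /\ V z) -> False.

Definition domain (D : C -> Prop) : Prop :=
  (exists z, D z) /\ open D /\ connected_set D.

Definition proper_domain (D : C -> Prop) : Prop :=
  domain D /\ exists z, ~ D z.

Definition unit_disc (z : C) : Prop := Cmod z < 1.

Definition holo_into (Om Y : C -> Prop) (h : C -> C) : Prop :=
  (forall z, Om z -> ex_derive h z) /\ (forall z, Om z -> Y (h z)).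

Definition hurwitz_family (Om Y : C -> Prop) (w s : C) (h : C -> C) : Prop :=
  holo_into Om Y h /\ h w = s /\ (forall z, Om z -> z <> w -> h z <> s).

(* r_Y(v) = max { h'(0) : h in H^v_0(D, Y), h'(0) > 0 }; taken as the
   supremum in Rbar (it is a maximum, by the paper). *)
Definition hurwitz_radius (Y : C -> Prop) (v : C) : Rbar :=
  Rbar_lub (fun x : Rbar => exists (h : C -> C) (l : R),
    hurwitz_family unit_disc Y 0 v h /\
    is_derive (h : C_AbsRing -> C_NormedModule) (0 : C) (RtoC l) /\ 0 < l /\ x = Finite l).

(* eta_Y(v) = 2 / r_Y(v) (with 2/+oo = 0; the -oo case never occurs) *)
Definition hurwitz_density (Y : C -> Prop) (v : C) : Rbar :=
  match hurwitz_radius Y v with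
  | Finite r => Finite (2 / r)
  | p_infty => Finite 0
  | m_infty => p_infty
  end.

Definition caratheodory_density (Om Y : C -> Prop) (s w : C) : Rbar :=
  let E := fun x : Rbar => exists (h : C -> C) (l : C),
      hurwitz_family Om Y w s h /\
      is_derive (h : C_AbsRing -> C_NormedModule) w l /\
      x = Rbar_mult (hurwitz_density Y (h w)) (Finite (Cmod l)) in
  if excluded_middle_informative (exists h, hurwitz_family Om Y w s h)
  then Rbar_lub E else Finite 0.

(* Main.v *)
Require Import Defs.
From Stdlib Require Import Reals Lra Classical ClassicalEpsilon.
From Coquelicot Require Import Coquelicot.

Lemma lub_ok (E : Rbar -> Prop) : Rbar_is_lub E (Rbar_lub E).
Proof. unfold Rbar_lub. destruct (Rbar_ex_lub E); auto. Qed.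

Definition RS (Y : C -> Prop) (v : C) (h : C -> C) (l : R) : Prop :=
  hurwitz_family unit_disc Y 0 v h /\
    is_derive (h : C_AbsRing -> C_NormedModule) (0 : C) (RtoC l) /\ 0 < l.

Lemma radius_ub Y v h l : RS Y v h l -> Rbar_le (Finite l) (hurwitz_radius Y v).
Proof.
  intros [H1 [H2 H3]]. unfold hurwitz_radius.
  apply (proj1 (lub_ok _)). exists h, l; auto.
Qed.

Lemma radius_least Y v b : (forall h l, RS Y v h l -> Rbar_le (Finite l) b) ->
  Rbar_le (hurwitz_radius Y v) b.
Proof.
  intros H. unfold hurwitz_radius. apply (proj2 (lub_ok _)).
  intros x [h [l [H1 [H2 [H3 ->]]]]]. apply (H h l). exact (conj H1 (conj H2 H3)).
Qed.

Lemma radius_ne Y v : hurwitz_radius Y v <> m_infty -> exists h l, RS Y v h l.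
Proof.
  intros H. apply NNPP; intros Hn. apply H.
  assert (Rbar_le (hurwitz_radius Y v) m_infty).
  { apply radius_least. intros h l Hr. exfalso. apply Hn. eauto. }
  destruct (hurwitz_radius Y v); simpl in *; tauto.
Qed.

Lemma RS_pos Y v h l : RS Y v h l -> 0 < l.
Proof. intros [_ [_ H]]; exact H. Qed.

Lemma tr (f: C->C) z (l : C) : @is_derive C_AbsRing C_NormedModule f z l -> @is_derive C_AbsRing (AbsRing_NormedModule C_AbsRing) f z l.
Proof. intros [H1 H2]. split.
- destruct H1 as [a b c]. split.
  + intros x y. exact (a x y).
  + intros k x. exact (b k x).
  + destruct c as [M [HM HM2]]. exists M. split; auto.
- intros x Hx eps. exact (H2 x Hx eps).
Qed.

Lemma unit_alg (l : C) (c m : R) : c = Cmod l -> 0 < c ->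
  Cmult (Cmult (Cdiv (Cconj l) (RtoC c)) (RtoC m)) l = RtoC (c * m).
Proof.
  intros Hc Hpos. destruct l as [a b].
  assert (Hc2 : c * c = a * a + b * b).
  { rewrite Hc. unfold Cmod. simpl. rewrite sqrt_sqrt; nra. }
  unfold Cdiv, Cmult, Cinv, Cconj, RtoC; simpl.
  apply injective_projections; simpl; field_simplify; try lra.
  - replace (a ^ 2 * c * m + c * b ^ 2 * m) with (c * m * (c * c)) by (rewrite Hc2; ring).
    field. lra.

Qed.

Lemma key (Om Y : C -> Prop) (s w : C) (h : C -> C) (l : C) (g : C -> C) (m : R) :
  hurwitz_family Om Y w s h ->
  is_derive (h : C_AbsRing -> C_NormedModule) w l ->
  0 < Cmod l -> RS Om w g m -> RS Y s (fun z => h (g (Cmult (Cdiv (Cconj l) (RtoC (Cmod l))) z))) (Cmod l * m).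
Proof.
  intros [[Hhd Hhy] [Hhw Hhne]] Hdl Hc [[[Hgd Hgy] [Hg0 Hgne]] [Hgm Hm]].
  set (c := Cmod l). set (u := Cdiv (Cconj l) (RtoC c)).
  assert (Hu : Cmod u = 1).
  { unfold u. rewrite Cmod_div. rewrite Cmod_conj, Cmod_R. fold c. rewrite Rabs_pos_eq; [field|]; unfold c; lra.
    intros E. apply (f_equal fst) in E. simpl in E. unfold c in E. lra. }
  assert (Hmod : forall z, Cmod (Cmult u z) = Cmod z).
  { intros z. rewrite Cmod_mult, Hu. ring. }
  assert (Hud : forall z, is_derive (fun z : C_AbsRing => Cmult u z) z u).
  { intros z. pose proof (is_derive_scal_l (K := C_AbsRing) (V := C_NormedModule) (fun t => t) z one u (is_derive_id z)) as H.
    match type of H with is_derive _ _ ?k => assert (E : k = u) end.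
    { change (Cmult 1 u = u). ring. }
    rewrite E in H.
    eapply is_derive_ext; [| exact H].
    intros t. simpl. change (Cmult t u = Cmult u t). apply Cmult_comm.
    }
  assert (Hd0 : forall z : C, Cmult u z = 0 -> z = 0).
  { intros z E. apply Cmod_eq_0. rewrite <- Hmod, E. apply Cmod_0. }
  assert (Hu0 : Cmult u 0 = 0) by ring.
  assert (Hdisc : forall z, unit_disc z -> unit_disc (Cmult u z)).
  { intros z. unfold unit_disc. rewrite Hmod. auto. }
  split; [split; [split|split]|split].
  - intros z Hz. destruct (Hgd _ (Hdisc z Hz)) as [dg Hdg].
    destruct (Hhd _ (Hgy _ (Hdisc z Hz))) as [dh Hdh].
    eexists. apply (is_derive_comp (K := C_AbsRing) (V := C_NormedModule) h).
    exact Hdh.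
    apply (is_derive_comp (K := C_AbsRing) (V := AbsRing_NormedModule C_AbsRing) g). apply tr; exact Hdg. apply tr, Hud.
  - intros z Hz. apply Hhy, Hgy, Hdisc, Hz.
  - simpl. rewrite Hu0, Hg0. exact Hhw.
  - intros z Hz Hz0. apply Hhne. apply Hgy, Hdisc, Hz.
    apply Hgne. apply Hdisc, Hz. intros E. apply Hz0, Hd0, E.
  - assert (HG : @is_derive C_AbsRing (AbsRing_NormedModule C_AbsRing) g (Cmult u 0) (RtoC m)).
    { rewrite Hu0. apply tr; exact Hgm. }
    pose proof (is_derive_comp (K:=C_AbsRing) (V:=AbsRing_NormedModule C_AbsRing) g (fun z => Cmult u z) (RtoC 0) _ _ HG (tr _ _ _ (Hud (RtoC 0)))) as H1.
    assert (H2 := is_derive_comp (K := C_AbsRing) (V := C_NormedModule) h _ _ _ _ (ltac:(rewrite Hu0, Hg0; exact Hdl) : is_derive h (g (Cmult u 0)) l) H1).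
    match type of H2 with is_derive _ _ ?k => assert (E : k = RtoC (c * m)) end.
    { change (Cmult (Cmult u m) l = RtoC (c * m)). apply unit_alg; auto. }
    rewrite E in H2. exact H2.
  - apply Rmult_lt_0_compat; auto.
Qed.

Lemma density_nonneg Om w : Rbar_le (Finite 0) (hurwitz_density Om w).
Proof.
  unfold hurwitz_density. destruct (hurwitz_radius Om w) as [r| |] eqn:E; simpl; try lra; auto.
  destruct (radius_ne Om w) as [g [m Hg]]. rewrite E; discriminate.
  pose proof (radius_ub _ _ _ _ Hg) as H. rewrite E in H. simpl in H.
  pose proof (RS_pos _ _ _ _ Hg). apply Rlt_le. apply Rdiv_lt_0_compat; lra.
Qed.

Theorem proposition3p8 (Om Y : C -> Prop) (s : C) :
  proper_domain Om -> proper_domain Y -> Y s ->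
  (forall z, Om z -> Rbar_lt (Finite 0) (caratheodory_density Om Y s z)) ->
  forall w, Om w -> Rbar_le (caratheodory_density Om Y s w) (hurwitz_density Om w).
Proof.
  intros _ _ _ Hpos w Hw. specialize (Hpos w Hw).
  unfold caratheodory_density in *.
  destruct (excluded_middle_informative (exists h, hurwitz_family Om Y w s h)) as [Hex|Hex].
  2:{ simpl in Hpos. lra. }
  apply (proj2 (lub_ok _)).
  intros x [h [l [Hh [Hd ->]]]].
  rewrite (proj1 (proj2 Hh)).
  destruct (Rle_lt_or_eq_dec 0 (Cmod l) (Cmod_ge_0 l)) as [Hc|Hc].
  2:{ rewrite <- Hc. replace (Rbar_mult (hurwitz_density Y s) (Finite 0)) with (Finite 0).
      apply density_nonneg.
      destruct (hurwitz_density Y s) as [a| |]; simpl; try (f_equal; ring).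
      all: destruct (Rle_dec 0 0) as [H0|H0]; [|lra];
        destruct (Rle_lt_or_eq_dec 0 0 H0); [lra|reflexivity]. }
  set (c := Cmod l) in *.
  assert (K : forall g m, RS Om w g m -> Rbar_le (Finite (c * m)) (hurwitz_radius Y s)).
  { intros g m Hg. eapply radius_ub. apply (key Om Y s w h l g m Hh Hd Hc Hg). }
  assert (KB : forall ry, hurwitz_radius Y s = Finite ry ->
             Rbar_le (hurwitz_radius Om w) (Finite (ry / c))).
  { intros ry E. apply radius_least. intros g m Hg. specialize (K g m Hg).
    rewrite E in K. simpl in *. apply (Rmult_le_reg_l c); [lra|].
    field_simplify; lra. }
  unfold hurwitz_density.
  destruct (hurwitz_radius Om w) as [ro| |] eqn:EO.
  - destruct (radius_ne Om w) as [g [m Hg]]. rewrite EO; discriminate.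
    pose proof (radius_ub _ _ _ _ Hg) as Hm. rewrite EO in Hm. simpl in Hm.
    pose proof (RS_pos _ _ _ _ Hg) as Hm0.
    specialize (K g m Hg).
    destruct (hurwitz_radius Y s) as [ry| |] eqn:EY.
    + specialize (KB ry eq_refl). simpl in *.
      assert (Hro : ro * c <= ry).
      { apply (Rmult_le_reg_r (/ c)). apply Rinv_0_lt_compat; lra.
        replace (ro * c * / c) with ro by (field; lra). exact KB. }
      assert (0 < c * m) by (apply Rmult_lt_0_compat; lra).
      apply (Rmult_le_reg_r (ry * ro)). nra.
      field_simplify; nra.
    + simpl. assert (0 < ro) by lra. apply Rlt_le. 
      replace (0 * c) with 0 by ring. apply Rdiv_lt_0_compat; lra.
    + simpl in K. contradiction.
  - destruct (hurwitz_radius Y s) as [ry| |] eqn:EY.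
    + specialize (KB ry eq_refl). simpl in KB. contradiction.
    + simpl. lra.
    + destruct (radius_ne Om w) as [g [m Hg]]. rewrite EO; discriminate.
      specialize (K g m Hg). simpl in K. contradiction.
  - destruct (Rbar_mult _ _); simpl; auto.
Qed.
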